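(* Let $0<b<1$, $K_3>0$, and let $\Omega=\{(r,\phi): b\le r\le 1,\ 0\le \phi<2\pi\}$ be the annulus in planar polar coordinates. For $\delta\le 1$ and a radial perturbation $\eta=\eta(r)\in C^1([b,1])$, define the second variation of the Oseen–Frank energy about the defect-free state by $$\delta^2E(\eta,\delta)=K_3\iint_\Omega \Big(|\nabla\eta|^2-\delta\Big(\frac{\eta}{r}+\eta_r\Big)^2\Big)\,d\Omega = 2\pi K_3\int_b^1\Big(\eta_r^2-\delta\Big(\frac{\eta}{r}+\eta_r\Big)^2\Big)\,r\,dr.$$ Then for every admissible $\eta$, i.e. every $\eta\in C^1([b,1])$ with $\eta(b)=\eta(1)=0$ and $\eta\not\equiv 0$, there exists $\delta_\eta<1$ such that $\delta^2E(\eta,\delta)<0$ for all $\delta$ with $\delta_\eta<\delta\le 1$.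
   Context: This is the second variation of the two-dimensional Oseen–Frank energy $E[\theta]=\iint_\Omega \frac{K_1}{2}(\nabla\cdot\mathbf n)^2+\frac{K_3}{2}(\mathbf n\times(\nabla\times\mathbf n))^2\,d\Omega$, $\mathbf n=(\cos\theta,\sin\theta,0)$, about the defect-free state $\theta^*=\phi+\pi/2$, with Dirichlet (strong tangent) boundary conditions on $r=b$ and $r=1$ (so perturbations vanish there). The elastic anisotropy is $\delta=1-K_1/K_3$ with $K_1\ge 0$, $K_3>0$. *)

(* Defs.v *)
From Stdlib Require Import Reals.
From Coquelicot Require Import Coquelicot.
Open Scope R_scope.

Definition Icc (a b : R) (x : R) : Prop := a <= x <= b.

(* [deta] is the derivative of [eta] on [a,b], taken within [a,b]
   (one-sided at the endpoints), and [deta] is continuous on [a,b]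
   (relative to [a,b]). *)
Definition C1_on (a b : R) (eta deta : R -> R) : Prop :=
  forall r, Icc a b r ->
    filterlim (fun x => (eta x - eta r) / (x - r))
              (within (fun x => Icc a b x /\ x <> r) (locally r))
              (locally (deta r))
    /\ filterlim deta (within (Icc a b) (locally r)) (locally (deta r)).

Definition second_variation (b K3 : R) (eta deta : R -> R) (delta : R) : R :=
  2 * PI * K3 *
  RInt (fun r => (deta r ^ 2 - delta * (eta r / r + deta r) ^ 2) * r) b 1.

(* Main.v *)
Require Import Defs.
From Stdlib Require Import Reals Lra.
From Coquelicot Require Import Coquelicot.
Open Scope R_scope.

Lemma ballR (x y e : R) : ball x e y <-> Rabs (y - x) < e.
Proof. reflexivity. Qed.

Lemma C1_dq b eta deta r : C1_on b 1 eta deta -> Icc b 1 r ->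
  forall eps, 0 < eps -> exists d, 0 < d /\ forall y, Icc b 1 y -> y <> r ->
   Rabs (y - r) < d -> Rabs ((eta y - eta r)/(y - r) - deta r) < eps.
Proof.
intros H Hr eps He. destruct (H r Hr) as [H1 _].
pose proof (H1 _ (locally_ball (deta r) (mkposreal eps He))) as H2; clear H1; rename H2 into H1. destruct H1 as [d Hd].
exists d; split; [apply cond_pos|]. intros y Hy Hyr Hd'.
apply (Hd y); [exact Hd'| split; assumption].
Qed.

Lemma C1_ct b eta deta r : C1_on b 1 eta deta -> Icc b 1 r ->
  forall eps, 0 < eps -> exists d, 0 < d /\ forall y, Icc b 1 y ->
   Rabs (y - r) < d -> Rabs (deta y - deta r) < eps.
Proof.
intros H Hr eps He. destruct (H r Hr) as [_ H1].
pose proof (H1 _ (locally_ball (deta r) (mkposreal eps He))) as H2; clear H1; rename H2 into H1. destruct H1 as [d Hd].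
exists d; split; [apply cond_pos|]. intros y Hy Hd'.
apply (Hd y); assumption.
Qed.
Lemma mR (a c : R) : minus a c = a - c. Proof. reflexivity. Qed.
Lemma pR (a c : R) : plus a c = a + c. Proof. reflexivity. Qed.
Lemma sR (a c : R) : scal a c = a * c. Proof. reflexivity. Qed.

Lemma cmul (f g : R -> R) x : continuous f x -> continuous g x -> continuous (fun y => f y * g y) x.
Proof. intros; apply (continuous_mult (K:=R_AbsRing)); auto. Qed.
Lemma cplus (f g : R -> R) x : continuous f x -> continuous g x -> continuous (fun y => f y + g y) x.
Proof. intros; apply (continuous_plus (V:=R_NormedModule)); auto. Qed.

Lemma cont_ed (f : R -> R) x : (forall eps, 0 < eps -> exists d, 0 < d /\ forall y, Rabs (y - x) < d -> Rabs (f y - f x) < eps) -> continuous f x.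
Proof.
intros H P [e He]. destruct (H e (cond_pos e)) as [d [Hd Hf]].
exists (mkposreal d Hd). intros y Hy. apply He. apply Hf. exact Hy.
Qed.

Section S.
Variables (b : R) (eta deta : R -> R).
Hypothesis Hb : 0 < b < 1.
Hypothesis HC : C1_on b 1 eta deta.

Definition cl x := Rmax b (Rmin 1 x).
Definition D x := deta (cl x).
Definition E x := eta (cl x) + deta b * Rmin (x - b) 0 + deta 1 * Rmax (x - 1) 0.

Lemma cl_in x : Icc b 1 (cl x).
Proof. unfold cl, Icc. destruct (Rle_dec x 1).
 - rewrite Rmin_right by lra. destruct (Rle_dec b x).
   + rewrite Rmax_right by lra; lra.
   + rewrite Rmax_left by lra; lra.
 - rewrite Rmin_left by lra. rewrite Rmax_right by lra; lra.
Qed.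

Lemma cl_id x : Icc b 1 x -> cl x = x.
Proof. unfold cl, Icc; intros. rewrite Rmin_right by lra. rewrite Rmax_right by lra. reflexivity. Qed.

Lemma cl_lip x y : Icc b 1 x -> Rabs (cl y - x) <= Rabs (y - x).
Proof. unfold cl, Icc; intros. destruct (Rle_dec y 1).
 - rewrite Rmin_right by lra. destruct (Rle_dec b y).
   + rewrite Rmax_right by lra; lra.
   + rewrite Rmax_left by lra. rewrite !Rabs_left1 by lra. lra.
 - rewrite Rmin_left by lra. rewrite Rmax_right by lra. rewrite !Rabs_right by lra. lra.
Qed.

Lemma E_in y : Icc b 1 y -> E y = eta y.
Proof. intros H. unfold E. rewrite cl_id by auto. unfold Icc in H.
 rewrite Rmin_right by lra. rewrite Rmax_right by lra. ring. Qed.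

Lemma E_lt y : y < b -> E y = eta b + deta b * (y - b).
Proof. intros H. unfold E, cl. rewrite (Rmin_right 1 y) by lra. rewrite Rmax_left by lra.
 rewrite Rmin_left by lra. rewrite Rmax_right by lra. ring. Qed.

Lemma E_gt y : 1 < y -> E y = eta 1 + deta 1 * (y - 1).
Proof. intros H. unfold E, cl. rewrite (Rmin_left 1 y) by lra. rewrite Rmax_right by lra.
 rewrite Rmin_right by lra. rewrite Rmax_left by lra. ring. Qed.

Lemma D_in y : Icc b 1 y -> D y = deta y.
Proof. intros; unfold D; rewrite cl_id; auto. Qed.

Lemma D_cont x : Icc b 1 x -> continuous D x.
Proof.
intros Hx. apply cont_ed. intros eps He.
destruct (C1_ct b eta deta x HC Hx eps He) as [d [Hd Hf]].
exists d; split; auto. intros y Hy. rewrite (D_in x Hx). unfold D.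
apply Hf. apply cl_in. pose proof (cl_lip x y Hx). lra.
Qed.

Lemma E_der x : Icc b 1 x -> is_derive E x (D x).
Proof.
intros Hx. apply is_derive_Reals. intros eps He.
destruct (C1_dq b eta deta x HC Hx eps He) as [d1 [Hd1 Hf]].
assert (Hd0 : exists d0, 0 < d0 /\ forall y, Rabs (y - x) < d0 ->
   (y < b -> x = b) /\ (1 < y -> x = 1)).
{ unfold Icc in Hx. destruct (Req_dec x b) as [->|Hxb].
  - exists (1 - b); split; [lra|]. intros y Hy. split; [auto|].
    intros Hy1. exfalso. apply Rabs_def2 in Hy. lra.
  - destruct (Req_dec x 1) as [->|Hx1].
    + exists (1 - b); split; [lra|]. intros y Hy. split; [|auto].
      intros Hy1. exfalso. apply Rabs_def2 in Hy. lra.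
    + exists (Rmin (x - b) (1 - x)); split.
      * apply Rmin_case; lra.
      * intros y Hy. apply Rabs_def2 in Hy. pose proof (Rmin_l (x-b) (1-x)). pose proof (Rmin_r (x-b) (1-x)).
        split; intros; lra. }
destruct Hd0 as [d0 [Hd0 Hs]].
assert (Hpos : 0 < Rmin d1 d0) by (apply Rmin_case; lra).
exists (mkposreal _ Hpos). intros h Hh0 Hh. simpl in Hh.
pose proof (Rmin_l d1 d0). pose proof (Rmin_r d1 d0).
assert (Hy : Rabs (x + h - x) < d0) by (replace (x + h - x) with h by ring; lra).
destruct (Hs _ Hy) as [Hl Hr].
rewrite (D_in x Hx).
destruct (Rlt_dec (x + h) b) as [Hlt|Hnlt].
{ specialize (Hl Hlt). subst x. rewrite E_lt by auto. rewrite (E_in b) by (unfold Icc; lra).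
  replace ((eta b + deta b * (b + h - b) - eta b) / h - deta b) with 0 by (field; auto).
  rewrite Rabs_R0; lra. }
destruct (Rlt_dec 1 (x + h)) as [Hgt|Hngt].
{ specialize (Hr Hgt). subst x. rewrite E_gt by auto. rewrite (E_in 1) by (unfold Icc; lra).
  replace ((eta 1 + deta 1 * (1 + h - 1) - eta 1) / h - deta 1) with 0 by (field; auto).
  rewrite Rabs_R0; lra. }
assert (Hi : Icc b 1 (x + h)) by (unfold Icc; lra).
rewrite (E_in _ Hi), (E_in _ Hx).
replace h with (x + h - x) at 2 by ring.
apply Hf; auto. intro Heq. apply Hh0. lra.
replace (x + h - x) with h by ring. lra.
Qed.

Lemma E_cont x : Icc b 1 x -> continuous E x.
Proof. intros H. apply (ex_derive_continuous (K:=R_AbsRing) (V:=R_NormedModule)). exists (D x). apply E_der; auto. Qed.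

End S.

Lemma ex_cont (f : R -> R) a c : a <= c -> (forall x, a <= x <= c -> continuous f x) -> ex_RInt f a c.
Proof. intros H Hc. apply (ex_RInt_continuous (V:=R_CompleteNormedModule)). rewrite Rmin_left, Rmax_right by lra. auto. Qed.

Theorem proposition1 (b K3 : R) (eta deta : R -> R) :
  0 < b < 1 ->
  0 < K3 ->
  C1_on b 1 eta deta ->
  eta b = 0 -> eta 1 = 0 ->
  (exists r, Icc b 1 r /\ eta r <> 0) ->
  exists delta_eta : R, delta_eta < 1 /\
    forall delta : R, delta_eta < delta <= 1 ->
      second_variation b K3 eta deta delta < 0.
Proof.
intros Hb HK HC Heb He1 [r0 [Hr0 Hne]].
set (Ef := E b eta deta). set (Df := D b deta).
assert (cE : forall x, b <= x <= 1 -> continuous Ef x) by (intros; apply (E_cont b eta deta); auto; unfold Icc; lra).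
assert (cD : forall x, b <= x <= 1 -> continuous Df x) by (intros; apply (D_cont b eta deta); auto; unfold Icc; lra).
assert (cI : forall x, b <= x <= 1 -> continuous (fun r => / r) x) by (intros; apply continuous_Rinv; lra).
assert (cId : forall x : R, continuous (fun r : R => r) x) by (intros; apply continuous_id).
set (f1 := fun r => Df r * Df r * r).
set (f2 := fun r => (Ef r * / r + Df r) * (Ef r * / r + Df r) * r).
set (h := fun r => Ef r * Ef r * / r).
set (g := fun r => 2 * Df r * Ef r).
assert (c1 : forall x, b <= x <= 1 -> continuous f1 x).
{ intros. unfold f1. repeat first [solve [auto] | apply cmul | apply cplus]. }
assert (c2 : forall x, b <= x <= 1 -> continuous f2 x).
{ intros. unfold f2. repeat first [solve [auto] | apply cmul | apply cplus]. }
assert (ch : forall x, b <= x <= 1 -> continuous h x).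
{ intros. unfold h. repeat first [solve [auto] | apply cmul | apply cplus]. }
assert (cg : forall x, b <= x <= 1 -> continuous g x).
{ intros. unfold g. repeat first [solve [auto] | solve [apply continuous_const] | apply cmul | apply cplus]. }
assert (i1 : ex_RInt f1 b 1) by (apply ex_cont; auto; lra).
assert (i2 : ex_RInt f2 b 1) by (apply ex_cont; auto; lra).
assert (ih : ex_RInt h b 1) by (apply ex_cont; auto; lra).
assert (ig : ex_RInt g b 1) by (apply ex_cont; auto; lra).
set (A := RInt f1 b 1). set (B := RInt f2 b 1). set (C := RInt h b 1).
assert (SV : forall d, second_variation b K3 eta deta d = 2 * PI * K3 * (A - d * B)).
{ intros d.
  assert (I : is_RInt (fun r => minus (f1 r) (scal d (f2 r))) b 1 (minus A (scal d B))).
  { apply (is_RInt_minus (V:=R_NormedModule)).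
    - apply (RInt_correct (V:=R_CompleteNormedModule)); auto.
    - apply (is_RInt_scal (V:=R_NormedModule)). apply (RInt_correct (V:=R_CompleteNormedModule)); auto. }
  unfold second_variation. f_equal. apply (is_RInt_unique (V:=R_CompleteNormedModule)).
  rewrite mR, sR in I. eapply (is_RInt_ext (V:=R_NormedModule)); [|exact I].
  rewrite Rmin_left, Rmax_right by lra. intros x Hx.
  assert (Hi : Icc b 1 x) by (unfold Icc; lra).
  rewrite mR, sR. unfold f1, f2, Df, Ef. rewrite (D_in b deta x Hi), (E_in b eta deta x Hi).
  match goal with |- ?a = ?c => change (@eq R a c) end. field. lra. }
assert (HBA : B - A = C + RInt g b 1).
{ assert (I : is_RInt (fun r => minus (f2 r) (f1 r)) b 1 (minus B A)).
  { apply (is_RInt_minus (V:=R_NormedModule)); apply (RInt_correct (V:=R_CompleteNormedModule)); auto. }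
  assert (J : is_RInt (fun r => plus (h r) (g r)) b 1 (plus C (RInt g b 1))).
  { apply (is_RInt_plus (V:=R_NormedModule)); apply (RInt_correct (V:=R_CompleteNormedModule)); auto. }
  apply (is_RInt_unique (V:=R_CompleteNormedModule)) in I.
  apply (is_RInt_unique (V:=R_CompleteNormedModule)) in J.
  rewrite mR in I. rewrite pR in J. rewrite <- I, <- J.
  apply (RInt_ext (V:=R_CompleteNormedModule)).
  rewrite Rmin_left, Rmax_right by lra. intros x Hx.
  rewrite mR, pR. unfold f1, f2, h, g.
  match goal with |- ?a = ?c => change (@eq R a c) end. field. lra. }
assert (HG : RInt g b 1 = 0).
{ apply (is_RInt_unique (V:=R_CompleteNormedModule)).
  replace 0 with (minus (Ef 1 ^ 2) (Ef b ^ 2)).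
  - apply (is_RInt_derive (V:=R_CompleteNormedModule) (fun x => Ef x ^ 2) g); rewrite Rmin_left, Rmax_right by lra.
    + intros x Hx. replace (g x) with (INR 2 * Df x * Ef x ^ Init.Nat.pred 2) by (unfold g; simpl; ring).
      apply is_derive_pow. apply (E_der b eta deta); auto; unfold Icc; lra.
    + auto.
  - unfold Ef. rewrite (E_in b eta deta 1), (E_in b eta deta b) by (unfold Icc; lra).
    rewrite Heb, He1, mR. match goal with |- ?a = ?c => change (@eq R a c) end. ring. }
assert (HA : 0 <= A).
{ apply RInt_ge_0; auto; [lra|]. intros x Hx. unfold f1.
  apply Rmult_le_pos; [apply Rle_0_sqr | lra]. }
assert (HC0 : 0 < C).
{ assert (Hr0' : b < r0 < 1).
  { unfold Icc in Hr0. destruct Hr0 as [h1 h2]. split.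
    - destruct h1 as [Hl|Hl]; auto. subst; congruence.
    - destruct h2 as [Hl|Hl]; auto. subst; congruence. }
  assert (hpos : 0 < h r0).
  { unfold h, Ef. rewrite (E_in b eta deta r0 Hr0).
    apply Rmult_lt_0_compat; [|apply Rinv_0_lt_compat; lra].
    pose proof (Rsqr_pos_lt _ Hne). unfold Rsqr in *. lra. }
  assert (hr : 0 < h r0 / 2) by lra.
  destruct (ch r0 ltac:(lra) _ (locally_ball (h r0) (mkposreal _ hr))) as [d Hd].
  pose proof (cond_pos d) as dpos.
  set (a := Rmax b (r0 - d/2)). set (c := Rmin 1 (r0 + d/2)).
  assert (Ha : b <= a < r0) by (unfold a; split; [apply Rmax_l| apply Rmax_case; lra]).
  assert (Hc : r0 < c <= 1) by (unfold c; split; [apply Rmin_case; lra| apply Rmin_l]).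
  assert (Ha2 : r0 - d/2 <= a) by apply Rmax_r.
  assert (Hc2 : c <= r0 + d/2) by apply Rmin_r.
  assert (hnn : forall x, b < x < 1 -> 0 <= h x).
  { intros x Hx. unfold h. apply Rmult_le_pos; [|left; apply Rinv_0_lt_compat; lra].
    apply Rle_0_sqr. }
  assert (hac : 0 < RInt h a c).
  { apply RInt_gt_0; [lra| |intros; apply ch; lra].
    intros x Hx. assert (Hb' : ball r0 d x) by (apply ballR; apply Rabs_def1; lra).
    specialize (Hd x Hb'). apply ballR in Hd. apply Rabs_def2 in Hd. assert (h x - h r0 < h r0/2 /\ -(h r0/2) < h x - h r0) by exact Hd. lra. }
  assert (hba : 0 <= RInt h b a).
  { apply RInt_ge_0; [lra| apply ex_cont; [lra| intros; apply ch; lra]| intros; apply hnn; lra]. }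
  assert (hc1 : 0 <= RInt h c 1).
  { apply RInt_ge_0; [lra| apply ex_cont; [lra| intros; apply ch; lra]| intros; apply hnn; lra]. }
  assert (E1 : RInt h b a + RInt h a 1 = C).
  { rewrite <- pR. apply (RInt_Chasles (V:=R_CompleteNormedModule)); apply ex_cont; try lra; intros; apply ch; lra. }
  assert (E2 : RInt h a c + RInt h c 1 = RInt h a 1).
  { rewrite <- pR. apply (RInt_Chasles (V:=R_CompleteNormedModule)); apply ex_cont; try lra; intros; apply ch; lra. }
  lra. }
assert (HB : 0 < B) by lra.
exists (A / B). split.
- apply (Rmult_lt_reg_r B); auto. unfold Rdiv. rewrite Rmult_assoc, Rinv_l by lra. lra.
- intros d [Hd1 Hd2]. rewrite SV.
  assert (A - d * B < 0).
  { assert (A / B * B < d * B) by (apply Rmult_lt_compat_r; auto).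
    unfold Rdiv in H. rewrite Rmult_assoc, Rinv_l in H by lra. lra. }
  assert (0 < 2 * PI * K3) by (pose proof PI_RGT_0; apply Rmult_lt_0_compat; lra).
  nra.
Qed.
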